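(* Let $p(a,b\mid x_0,x_1,y,y')$ be a non-signalling racbox. Define a two-input, two-output box $q$ by fixing Alice's first input to $0$ and Bob's second input to $0$: $$q(a,b\mid x,y) := p(a,b\mid x_0=0,\ x_1=x,\ y,\ y'=0), \qquad x,y\in\{0,1\}.$$ Then $q$ is the PR-box, that is, for all $x,y,a,b\in\{0,1\}$, $$q(a,b\mid x,y)=\begin{cases}\tfrac12 & \text{if } a\oplus b = xy,\\ 0 & \text{otherwise.}\end{cases}$$
   Context: A box is a family of conditional probability distributions $p(a,b\mid x_0,x_1,y,y')$ with $a,b,x_0,x_1,y,y'\in\{0,1\}$. Alice holds inputs $x_0,x_1$ and output $a$; Bob holds inputs $y,y'$ and output $b$. A racbox is a box with two properties. First, it is non-signalling from Bob to Alice: $p(a\mid x_0,x_1,y,y')$ does not depend on $(y,y')$. Second, whenever $a=y'$ one has $b=x_y$ with certainty. A racbox is non-signalling if, in addition, Bob's marginal $p(b\mid x_0,x_1,y,y')$ does not depend on $(x_0,x_1)$. *)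

(* Defs.v *)
From Stdlib Require Import Reals Bool.
Open Scope R_scope.

(* A box p(a,b | x0,x1,y,y'), arguments in the order a b x0 x1 y y'. *)
Definition box6 := bool -> bool -> bool -> bool -> bool -> bool -> R.

Definition is_box (p : box6) : Prop :=
  (forall a b x0 x1 y y', 0 <= p a b x0 x1 y y') /\
  (forall x0 x1 y y',
     p false false x0 x1 y y' + p false true x0 x1 y y'
   + p true false x0 x1 y y' + p true true x0 x1 y y' = 1).

Definition margA (p : box6) (a x0 x1 y y' : bool) : R :=
  p a false x0 x1 y y' + p a true x0 x1 y y'.

Definition margB (p : box6) (b x0 x1 y y' : bool) : R :=
  p false b x0 x1 y y' + p true b x0 x1 y y'.

Definition sel (x0 x1 y : bool) : bool := if y then x1 else x0.

(* Racbox: non-signalling from Bob to Alice, and a = y' implies b = x_y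
   with certainty (i.e. outcomes with a = y' and b <> x_y have probability 0). *)
Definition is_racbox (p : box6) : Prop :=
  is_box p /\
  (forall a x0 x1 y y' z z', margA p a x0 x1 y y' = margA p a x0 x1 z z') /\
  (forall a b x0 x1 y y', a = y' -> b <> sel x0 x1 y -> p a b x0 x1 y y' = 0).

Definition is_ns_racbox (p : box6) : Prop :=
  is_racbox p /\
  (forall b x0 x1 w0 w1 y y', margB p b x0 x1 y y' = margB p b w0 w1 y y').

Definition q_of (p : box6) (a b x y : bool) : R := p a b false x y false.

Definition PR (a b x y : bool) : R :=
  if Bool.eqb (xorb a b) (andb x y) then 1/2 else 0.

(* Main.v *)
Require Import Defs.
From Stdlib Require Import Reals Bool Lra.
Open Scope R_scope.

Theorem mainTheorem2 (p : box6) (Hp : is_ns_racbox p) :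
  forall x y a b : bool, q_of p a b x y = PR a b x y.
Proof.
  destruct Hp as [[[Hpos Hsum] [HA HZ]] HB].
  unfold margA, margB in *.
  pose proof (Hpos false false false false false false) as P1.
  pose proof (Hpos false false false false false true) as P2.
  pose proof (Hpos false false false false true false) as P3.
  pose proof (Hpos false false false false true true) as P4.
  pose proof (Hpos false false false true false false) as P5.
  pose proof (Hpos false false false true false true) as P6.
  pose proof (Hpos false false false true true false) as P7.
  assert (Z8 : p false false false true true false = 0) by (apply HZ; [reflexivity|simpl; discriminate]).
  pose proof (Hpos false false false true true true) as P9.
  pose proof (Hpos false false true false false false) as P10.
  assert (Z11 : p false false true false false false = 0) by (apply HZ; [reflexivity|simpl; discriminate]).
  pose proof (Hpos false false true false false true) as P12.
  pose proof (Hpos false false true false true false) as P13.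
  pose proof (Hpos false false true false true true) as P14.
  pose proof (Hpos false false true true false false) as P15.
  assert (Z16 : p false false true true false false = 0) by (apply HZ; [reflexivity|simpl; discriminate]).
  pose proof (Hpos false false true true false true) as P17.
  pose proof (Hpos false false true true true false) as P18.
  assert (Z19 : p false false true true true false = 0) by (apply HZ; [reflexivity|simpl; discriminate]).
  pose proof (Hpos false false true true true true) as P20.
  pose proof (Hpos false true false false false false) as P21.
  assert (Z22 : p false true false false false false = 0) by (apply HZ; [reflexivity|simpl; discriminate]).
  pose proof (Hpos false true false false false true) as P23.
  pose proof (Hpos false true false false true false) as P24.
  assert (Z25 : p false true false false true false = 0) by (apply HZ; [reflexivity|simpl; discriminate]).
  pose proof (Hpos false true false false true true) as P26.
  pose proof (Hpos false true false true false false) as P27.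
  assert (Z28 : p false true false true false false = 0) by (apply HZ; [reflexivity|simpl; discriminate]).
  pose proof (Hpos false true false true false true) as P29.
  pose proof (Hpos false true false true true false) as P30.
  pose proof (Hpos false true false true true true) as P31.
  pose proof (Hpos false true true false false false) as P32.
  pose proof (Hpos false true true false false true) as P33.
  pose proof (Hpos false true true false true false) as P34.
  assert (Z35 : p false true true false true false = 0) by (apply HZ; [reflexivity|simpl; discriminate]).
  pose proof (Hpos false true true false true true) as P36.
  pose proof (Hpos false true true true false false) as P37.
  pose proof (Hpos false true true true false true) as P38.
  pose proof (Hpos false true true true true false) as P39.
  pose proof (Hpos false true true true true true) as P40.
  pose proof (Hpos true false false false false false) as P41.
  pose proof (Hpos true false false false false true) as P42.
  pose proof (Hpos true false false false true false) as P43.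
  pose proof (Hpos true false false false true true) as P44.
  pose proof (Hpos true false false true false false) as P45.
  pose proof (Hpos true false false true false true) as P46.
  pose proof (Hpos true false false true true false) as P47.
  pose proof (Hpos true false false true true true) as P48.
  assert (Z49 : p true false false true true true = 0) by (apply HZ; [reflexivity|simpl; discriminate]).
  pose proof (Hpos true false true false false false) as P50.
  pose proof (Hpos true false true false false true) as P51.
  assert (Z52 : p true false true false false true = 0) by (apply HZ; [reflexivity|simpl; discriminate]).
  pose proof (Hpos true false true false true false) as P53.
  pose proof (Hpos true false true false true true) as P54.
  pose proof (Hpos true false true true false false) as P55.
  pose proof (Hpos true false true true false true) as P56.
  assert (Z57 : p true false true true false true = 0) by (apply HZ; [reflexivity|simpl; discriminate]).
  pose proof (Hpos true false true true true false) as P58.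
  pose proof (Hpos true false true true true true) as P59.
  assert (Z60 : p true false true true true true = 0) by (apply HZ; [reflexivity|simpl; discriminate]).
  pose proof (Hpos true true false false false false) as P61.
  pose proof (Hpos true true false false false true) as P62.
  assert (Z63 : p true true false false false true = 0) by (apply HZ; [reflexivity|simpl; discriminate]).
  pose proof (Hpos true true false false true false) as P64.
  pose proof (Hpos true true false false true true) as P65.
  assert (Z66 : p true true false false true true = 0) by (apply HZ; [reflexivity|simpl; discriminate]).
  pose proof (Hpos true true false true false false) as P67.
  pose proof (Hpos true true false true false true) as P68.
  assert (Z69 : p true true false true false true = 0) by (apply HZ; [reflexivity|simpl; discriminate]).
  pose proof (Hpos true true false true true false) as P70.
  pose proof (Hpos true true false true true true) as P71.
  pose proof (Hpos true true true false false false) as P72.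
  pose proof (Hpos true true true false false true) as P73.
  pose proof (Hpos true true true false true false) as P74.
  pose proof (Hpos true true true false true true) as P75.
  assert (Z76 : p true true true false true true = 0) by (apply HZ; [reflexivity|simpl; discriminate]).
  pose proof (Hpos true true true true false false) as P77.
  pose proof (Hpos true true true true false true) as P78.
  pose proof (Hpos true true true true true false) as P79.
  pose proof (Hpos true true true true true true) as P80.
  pose proof (Hsum false false false false) as S81.
  pose proof (HA false false false false false false false) as A82.
  pose proof (HB false false false false false false false) as B83.
  pose proof (HA true false false false false false false) as A84.
  pose proof (HB true false false false false false false) as B85.
  pose proof (Hsum false false false true) as S86.
  pose proof (HA false false false false true false false) as A87.
  pose proof (HB false false false false false false true) as B88.
  pose proof (HA true false false false true false false) as A89.
  pose proof (HB true false false false false false true) as B90.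
  pose proof (Hsum false false true false) as S91.
  pose proof (HA false false false true false false false) as A92.
  pose proof (HB false false false false false true false) as B93.
  pose proof (HA true false false true false false false) as A94.
  pose proof (HB true false false false false true false) as B95.
  pose proof (Hsum false false true true) as S96.
  pose proof (HA false false false true true false false) as A97.
  pose proof (HB false false false false false true true) as B98.
  pose proof (HA true false false true true false false) as A99.
  pose proof (HB true false false false false true true) as B100.
  pose proof (Hsum false true false false) as S101.
  pose proof (HA false false true false false false false) as A102.
  pose proof (HB false false true false false false false) as B103.
  pose proof (HA true false true false false false false) as A104.
  pose proof (HB true false true false false false false) as B105.
  pose proof (Hsum false true false true) as S106.
  pose proof (HA false false true false true false false) as A107.
  pose proof (HB false false true false false false true) as B108.
  pose proof (HA true false true false true false false) as A109.
  pose proof (HB true false true false false false true) as B110.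
  pose proof (Hsum false true true false) as S111.
  pose proof (HA false false true true false false false) as A112.
  pose proof (HB false false true false false true false) as B113.
  pose proof (HA true false true true false false false) as A114.
  pose proof (HB true false true false false true false) as B115.
  pose proof (Hsum false true true true) as S116.
  pose proof (HA false false true true true false false) as A117.
  pose proof (HB false false true false false true true) as B118.
  pose proof (HA true false true true true false false) as A119.
  pose proof (HB true false true false false true true) as B120.
  pose proof (Hsum true false false false) as S121.
  pose proof (HA false true false false false false false) as A122.
  pose proof (HB false true false false false false false) as B123.
  pose proof (HA true true false false false false false) as A124.
  pose proof (HB true true false false false false false) as B125.
  pose proof (Hsum true false false true) as S126.
  pose proof (HA false true false false true false false) as A127.
  pose proof (HB false true false false false false true) as B128.
  pose proof (HA true true false false true false false) as A129.
  pose proof (HB true true false false false false true) as B130.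
  pose proof (Hsum true false true false) as S131.
  pose proof (HA false true false true false false false) as A132.
  pose proof (HB false true false false false true false) as B133.
  pose proof (HA true true false true false false false) as A134.
  pose proof (HB true true false false false true false) as B135.
  pose proof (Hsum true false true true) as S136.
  pose proof (HA false true false true true false false) as A137.
  pose proof (HB false true false false false true true) as B138.
  pose proof (HA true true false true true false false) as A139.
  pose proof (HB true true false false false true true) as B140.
  pose proof (Hsum true true false false) as S141.
  pose proof (HA false true true false false false false) as A142.
  pose proof (HB false true true false false false false) as B143.
  pose proof (HA true true true false false false false) as A144.
  pose proof (HB true true true false false false false) as B145.
  pose proof (Hsum true true false true) as S146.
  pose proof (HA false true true false true false false) as A147.
  pose proof (HB false true true false false false true) as B148.
  pose proof (HA true true true false true false false) as A149.
  pose proof (HB true true true false false false true) as B150.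
  pose proof (Hsum true true true false) as S151.
  pose proof (HA false true true true false false false) as A152.
  pose proof (HB false true true false false true false) as B153.
  pose proof (HA true true true true false false false) as A154.
  pose proof (HB true true true false false true false) as B155.
  pose proof (Hsum true true true true) as S156.
  pose proof (HA false true true true true false false) as A157.
  pose proof (HB false true true false false true true) as B158.
  pose proof (HA true true true true true false false) as A159.
  pose proof (HB true true true false false true true) as B160.
  intros x y a b; unfold q_of, PR; destruct x, y, a, b; simpl; lra.
Qed.
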